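(* Let $M$ be an $n\times n$ Hermitian positive semidefinite matrix which is irreducible. If the argument of each non-zero off-diagonal entry of $-M$ lies in $\left(-\frac{\pi}{2^n},\frac{\pi}{2^n}\right)$, then $\operatorname{rank}(M)\ge n-1$.
   Context: A square matrix is irreducible if it cannot be brought into block-diagonal form (with at least two diagonal blocks) by a simultaneous permutation of its rows and columns. *)

(* Defs.v *)
From mathcomp Require Import all_boot all_fingroup all_algebra.
From mathcomp Require Import reals trigo.
From mathcomp.real_closed Require Import complex.
Set Implicit Arguments. Unset Strict Implicit. Unset Printing Implicit Defensive.
Import GRing.Theory Num.Theory.
Local Open Scope ring_scope.

Definition conjtr (R : realType) (n : nat) (M : 'M[R[i]]_n) : 'M[R[i]]_n :=
  \matrix_(i, j) (M j i)^*.

Definition hermitian_mx (R : realType) (n : nat) (M : 'M[R[i]]_n) : Prop :=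
  conjtr M = M.

(* Positive semidefinite: v^* M v >= 0 (i.e. real and nonnegative)
   for every column vector v. *)
Definition psd_mx (R : realType) (n : nat) (M : 'M[R[i]]_n) : Prop :=
  forall v : 'cV[R[i]]_n,
    0 <= ((\row_j (v j 0)^*) *m M *m v) 0 0.

(* M can be brought by a simultaneous permutation s of rows and columns
   (i.e. to P M P^T, whose (i,j) entry is M (s i) (s j)) into block-diagonal
   form with (at least) two diagonal blocks, the first of size k, 0 < k < n.
   (Any block-diagonal form with >= 2 blocks groups into one with 2 blocks.) *)
Definition reducible_mx (R : realType) (n : nat) (M : 'M[R[i]]_n) : Prop :=
  exists (s : 'S_n) (k : nat), (0 < k)%N /\ (k < n)%N /\
    forall i j : 'I_n, (i < k)%N -> ~~ (j < k)%N ->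
      M (s i) (s j) = 0 /\ M (s j) (s i) = 0.

Definition irreducible_mx (R : realType) (n : nat) (M : 'M[R[i]]_n) : Prop :=
  ~ reducible_mx M.

(* The (principal) argument of z lies in the open interval (a, b):
   z = |z| (cos phi + i sin phi) with phi in (-pi, pi] and a < phi < b. *)
Definition arg_in (R : realType) (z : R[i]) (a b : R) : Prop :=
  exists phi : R, [/\ - pi < phi, phi <= pi,
    z = `|z| * Complex (cos phi) (sin phi) & a < phi < b].

(* Main.v *)
Require Import Defs.
From mathcomp Require Import all_boot all_fingroup all_algebra.
From mathcomp Require Import reals trigo.
From mathcomp.real_closed Require Import complex.
From mathcomp Require Import all_order ring lra.
Set Implicit Arguments. Unset Strict Implicit.
Import Order.TTheory GRing.Theory Num.Theory.
Local Open Scope ring_scope.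


Section Sector.
Variable R : realType.
Implicit Types (p q x y : R) (z w : R[i]).

Definition sec p q z : Prop := q * `|complex.Im z| < p * complex.Re z.
Definition secz p q z : Prop := z = 0 \/ sec p q z.

Lemma key_real p q x1 y1 x2 y2 : 0 < p -> p <= q ->
  q * `|y1| < p * x1 -> q * `|y2| < p * x2 ->
  (q ^+ 2 - p ^+ 2) * `|x1 * y2 + y1 * x2| < p * q *+ 2 * (x1 * x2 - y1 * y2).
Proof.
move=> p0 pq h1 h2.
have a1 : q * y1 < p * x1 by apply: le_lt_trans h1; rewrite ler_pM2l ?(lt_le_trans p0) // ler_norm.
have b1 : - (q * y1) < p * x1 by apply: le_lt_trans h1; rewrite -mulrN ler_pM2l ?(lt_le_trans p0) // -normrN ler_norm.
have a2 : q * y2 < p * x2 by apply: le_lt_trans h2; rewrite ler_pM2l ?(lt_le_trans p0) // ler_norm.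
have b2 : - (q * y2) < p * x2 by apply: le_lt_trans h2; rewrite -mulrN ler_pM2l ?(lt_le_trans p0) // -normrN ler_norm.
have x1p : 0 < x1 by rewrite -(pmulr_rgt0 _ p0); lra.
have x2p : 0 < x2 by rewrite -(pmulr_rgt0 _ p0); lra.
have c1 : 0 < q * x1 - p * y1.
  have : p * y1 <= q * `|y1|.
    apply: (le_trans (y := p * `|y1|)); first by rewrite ler_pM2l // ler_norm.
    by rewrite ler_wpM2r.
  have : p * x1 <= q * x1 by rewrite ler_wpM2r // ltW.
  lra.
have d1 : 0 < q * x1 + p * y1.
  have : - (p * y1) <= q * `|y1|.
    apply: (le_trans (y := p * `|y1|)); first by rewrite -mulrN ler_pM2l // -normrN ler_norm.
    by rewrite ler_wpM2r.
  have : p * x1 <= q * x1 by rewrite ler_wpM2r // ltW.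
  lra.
have c2 : 0 < q * x2 - p * y2.
  have : p * y2 <= q * `|y2|.
    apply: (le_trans (y := p * `|y2|)); first by rewrite ler_pM2l // ler_norm.
    by rewrite ler_wpM2r.
  have : p * x2 <= q * x2 by rewrite ler_wpM2r // ltW.
  lra.
have d2 : 0 < q * x2 + p * y2.
  have : - (p * y2) <= q * `|y2|.
    apply: (le_trans (y := p * `|y2|)); first by rewrite -mulrN ler_pM2l // -normrN ler_norm.
    by rewrite ler_wpM2r.
  have : p * x2 <= q * x2 by rewrite ler_wpM2r // ltW.
  lra.
have e1 : 0 < q * y1 + p * x1 by lra.
have e2 : 0 < q * y2 + p * x2 by lra.
have f1 : 0 < p * x1 - q * y1 by lra.
have f2 : 0 < p * x2 - q * y2 by lra.
have P1 := mulr_gt0 c1 e2. have P2 := mulr_gt0 e1 c2.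
have P3 := mulr_gt0 d1 f2. have P4 := mulr_gt0 f1 d2.
have E1 : 0 < p * q *+ 2 * (x1 * x2 - y1 * y2) + (q ^+ 2 - p ^+ 2) * (x1 * y2 + y1 * x2).
  have -> : p * q *+ 2 * (x1 * x2 - y1 * y2) + (q ^+ 2 - p ^+ 2) * (x1 * y2 + y1 * x2)
    = (q * x1 - p * y1) * (q * y2 + p * x2) + (q * y1 + p * x1) * (q * x2 - p * y2) by ring.
  exact: addr_gt0.
have E2 : 0 < p * q *+ 2 * (x1 * x2 - y1 * y2) - (q ^+ 2 - p ^+ 2) * (x1 * y2 + y1 * x2).
  have -> : p * q *+ 2 * (x1 * x2 - y1 * y2) - (q ^+ 2 - p ^+ 2) * (x1 * y2 + y1 * x2)
    = (q * x1 + p * y1) * (p * x2 - q * y2) + (p * x1 - q * y1) * (q * x2 + p * y2) by ring.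
  exact: addr_gt0.
case: (lerP 0 (x1 * y2 + y1 * x2)) => s.
  rewrite ger0_norm //; lra.
rewrite ltr0_norm //; lra.
Qed.


Lemma secD p q z w : 0 <= q -> sec p q z -> sec p q w -> sec p q (z + w).
Proof.
case: z => a b; case: w => c d; rewrite /sec /= => q0 h1 h2.
apply: (le_lt_trans (y := q * `|b| + q * `|d|)).
  by rewrite -mulrDr ler_wpM2l // ler_normD.
rewrite mulrDr; exact: ltrD.
Qed.

Lemma secMr p q z c : 0 < c -> sec p q z -> sec p q (z * c).
Proof.
case: z => a b; case: c => r s; rewrite ltcE /sec /= => /andP[/eqP s0 r0] h.
move: s0 => /= s0; rewrite s0 !mulr0 add0r subr0 normrM (gtr0_norm r0) mulrA mulrA.
by rewrite ltr_pM2r.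
Qed.

Lemma secM p q z w : 0 < p -> p <= q -> sec p q z -> sec p q w ->
  sec (p * q *+ 2) (q ^+ 2 - p ^+ 2) (z * w).
Proof.
case: z => a b; case: w => c d; rewrite /sec /= => p0 pq h1 h2.
have := key_real p0 pq h1 h2.
by rewrite (addrC (a * d)) (mulrC b c).
Qed.

Lemma sec_mono p q z : 0 < p -> p <= q -> sec p q z ->
  sec (p * q *+ 2) (q ^+ 2 - p ^+ 2) z.
Proof.
case: z => a b; rewrite /sec /= => p0 pq h.
have q0 : 0 < q by apply: lt_le_trans pq.
have a0 : 0 < a.
  have : 0 <= q * `|b| by rewrite mulr_ge0 // ltW.
  move=> hh; rewrite -(pmulr_rgt0 _ p0); lra.
have n0 : 0 <= `|b| by [].
have h3 : q * (q * `|b|) <= q * (p * a) by rewrite ler_pM2l // ltW.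
have h4 : 0 <= p ^+ 2 * `|b| by rewrite mulr_ge0 // sqr_ge0.
have h5 : 0 < p * q * a by rewrite !mulr_gt0.
have E : (q ^+ 2 - p ^+ 2) * `|b| = q * (q * `|b|) - p ^+ 2 * `|b| by ring.
rewrite E.
have E2 : q * (p * a) = p * q * a by ring.
rewrite E2 in h3.
have E3 : p * q *+ 2 * a = p * q * a + p * q * a by rewrite mulr2n mulrDl.
rewrite E3; lra.
Qed.

Lemma sec_Re p q z : 0 < p -> 0 <= q -> sec p q z -> 0 < complex.Re z.
Proof.
case: z => a b; rewrite /sec /= => p0 q0 h.
have : 0 <= q * `|b| by rewrite mulr_ge0.
move=> hh; rewrite -(pmulr_rgt0 _ p0); lra.
Qed.

Lemma seczD p q z w : 0 <= q -> secz p q z -> secz p q w -> secz p q (z + w).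
Proof.
move=> q0 [->|h1] [->|h2]; rewrite ?add0r ?addr0; try by [left|right].
by right; apply: secD.
Qed.

Lemma seczMr p q z c : 0 < c -> secz p q z -> secz p q (z * c).
Proof. by move=> c0 [->|h]; [left; rewrite mul0r | right; apply: secMr]. Qed.

Lemma seczM p q z w : 0 < p -> p <= q -> secz p q z -> secz p q w ->
  secz (p * q *+ 2) (q ^+ 2 - p ^+ 2) (z * w).
Proof.
move=> p0 pq [->|h1]; first by left; rewrite mul0r.
move=> [->|h2]; first by left; rewrite mulr0.
by right; apply: secM.
Qed.

Lemma secz_mono p q z : 0 < p -> p <= q -> secz p q z ->
  secz (p * q *+ 2) (q ^+ 2 - p ^+ 2) z.
Proof. by move=> p0 pq [->|h]; [left|right; apply: sec_mono]. Qed.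

Lemma secz_sum0 p q z w : 0 < p -> 0 <= q -> secz p q z -> secz p q w ->
  z + w = 0 -> z = 0 /\ w = 0.
Proof.
move=> p0 q0 hz hw e.
have Re0 : complex.Re (z + w) = 0 by rewrite e.
have Rz : forall u, secz p q u -> 0 <= complex.Re u.
  by move=> u [->|h] //; apply: ltW; apply: sec_Re h.
case: hz => [hz|hz].
  by split=> //; move: e; rewrite hz add0r.
have h1 := sec_Re p0 q0 hz; have h2 := Rz _ hw.
have ReD : complex.Re (z + w) = complex.Re z + complex.Re w by case: (z) => a b; case: (w).
rewrite ReD in Re0; clear e hz hw Rz ReD; exfalso; lra.
Qed.

End Sector.


Section Trig.
Variable R : realType.

Lemma th_pos (k : nat) : 0 < pi / 2 ^+ k :> R.
Proof. by rewrite divr_gt0 // ?pi_gt0 // exprn_gt0. Qed.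

Lemma th_le (k : nat) : pi / 2 ^+ k.+1 <= pi / 2 :> R.
Proof.
rewrite ler_pM2l ?pi_gt0 // lef_pV2 ?posrE ?exprn_gt0 //.
by rewrite -[X in X <= _]expr1 ler_eXn2l // ltr1n.
Qed.

Lemma th_double (k : nat) : (pi / 2 ^+ k.+1) *+ 2 = pi / 2 ^+ k :> R.
Proof.
rewrite exprS.
have h : (2 ^+ k : R) != 0 by rewrite expf_neq0 // pnatr_eq0.
by rewrite -mulr_natr; field.
Qed.

Lemma sin_th2 (k : nat) :
  sin (pi / 2 ^+ k) = sin (pi / 2 ^+ k.+1) * cos (pi / 2 ^+ k.+1) *+ 2 :> R.
Proof. by rewrite -th_double sin_mulr2n mulrC. Qed.

Lemma cos_th2 (k : nat) :
  cos (pi / 2 ^+ k) = cos (pi / 2 ^+ k.+1) ^+ 2 - sin (pi / 2 ^+ k.+1) ^+ 2 :> R.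
Proof. by rewrite -th_double cos_mulr2n sin2cos2; ring. Qed.

Lemma sin_th_pos (k : nat) : 0 < sin (pi / 2 ^+ k.+1) :> R.
Proof.
apply: sin_gt0_pi; rewrite th_pos /=.
apply: le_lt_trans (th_le k) _.
by rewrite gtr_pMr ?pi_gt0 // invf_lt1 // ltr1n.
Qed.

Lemma cos_th_ge0 (k : nat) : 0 <= cos (pi / 2 ^+ k.+1) :> R.
Proof.
apply: cos_ge0_pihalf; rewrite th_le andbT.
apply: le_trans (ltW (th_pos _)); rewrite lerNl oppr0; apply: ltW.
by rewrite divr_gt0 ?pi_gt0.
Qed.

Lemma sin_le_cos (k : nat) :
  sin (pi / 2 ^+ k.+2) <= cos (pi / 2 ^+ k.+2) :> R.
Proof.
have h := cos_th_ge0 k; rewrite (cos_th2 k.+1) in h.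
have := sin_th_pos k.+1; have := cos_th_ge0 k.+1.
move: h; set s := sin _; set c := cos _ => h c0 s0.
rewrite leNgt; apply/negP => cs.
have : c ^+ 2 < s ^+ 2 by rewrite ltr_pXn2r // ?nnegrE ltW.
lra.
Qed.

Lemma arg_sec (th : R) (z : R[i]) : 0 < th <= pi / 2 ->
  arg_in z (- th) th -> z != 0 -> sec (sin th) (cos th) z.
Proof.
move=> /andP[t0 t1] [phi [p1 p2 ez /andP[a1 a2]]] z0.
have [r [er r0]] : exists r : R, `|z| = Complex r 0 /\ 0 < r.
  have h : 0 < `|z| by rewrite normr_gt0.
  move: h; case: (`|z|) => r s; rewrite ltcE /= => /andP[/eqP <- h].
  by exists r.
rewrite er in ez; rewrite ez /sec /= !mul0r subr0 addr0.
have pi0 := pi_gt0 R.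
have A : cos th * sin phi < sin th * cos phi.
  have : 0 < sin (th - phi) by apply: sin_gt0_pi; lra.
  rewrite sinB; lra.
have B : - (cos th * sin phi) < sin th * cos phi.
  have : 0 < sin (th + phi) by apply: sin_gt0_pi; lra.
  rewrite sinD; lra.
rewrite normrM (gtr0_norm r0). rewrite mulrCA (mulrCA (sin th)) ltr_pM2l //.
by case: (lerP 0 (sin phi)) => s; [rewrite ger0_norm | rewrite ltr0_norm // mulrN].
Qed.

End Trig.


Section Quad.
Variable R : realType.
Local Notation C := R[i].

Definition qf n (M : 'M[C]_n) (v : 'cV[C]_n) := ((\row_j (v j 0)^*) *m M *m v) 0 0.

Lemma qfE n (M : 'M[C]_n) v :
  qf M v = \sum_a \sum_b (v a 0)^* * M a b * v b 0.
Proof.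
rewrite /qf mxE.
under eq_bigr => b _ do rewrite mxE big_distrl /=.
rewrite exchange_big /=; apply: eq_bigr => a _; apply: eq_bigr => b _.
by rewrite mxE.
Qed.

Lemma qf_split m (M : 'M[C]_m.+1) k v : qf M v =
  (v k 0)^* * M k k * v k 0
  + (v k 0)^* * (\sum_j M k (lift k j) * v (lift k j) 0)
  + (\sum_i (v (lift k i) 0)^* * M (lift k i) k) * v k 0
  + \sum_i \sum_j (v (lift k i) 0)^* * M (lift k i) (lift k j) * v (lift k j) 0.
Proof.
rewrite qfE (bigD1_ord k) //= (bigD1_ord k) //=.
under [X in _ + X = _]eq_bigr => i _ do rewrite (bigD1_ord k) //=.
rewrite big_split /= mulr_sumr mulr_suml.
have e1 : \sum_(i < m) (v k 0)^* * (M k (lift k i) * v (lift k i) 0) =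
  \sum_(i < m) (v k 0)^* * M k (lift k i) * v (lift k i) 0.
  by apply: eq_bigr => i _; rewrite mulrA.
rewrite e1; ring.
Qed.

Lemma psd_diag n (M : 'M[C]_n) a : psd_mx M -> 0 <= M a a.
Proof.
move=> h; have := h (\col_b (b == a)%:R); rewrite -/(qf _ _) qfE.
rewrite (bigD1 a) //= [X in _ + X]big1 ?addr0; last first.
  move=> b ba; apply: big1 => c _; by rewrite mxE (negbTE ba) rmorph0 !mul0r.
rewrite (bigD1 a) //= [X in _ + X]big1 ?addr0; last first.
  by move=> b ba; rewrite !mxE (negbTE ba) mulr0.
by rewrite !mxE eqxx rmorph1 mul1r mulr1.
Qed.

Lemma hermE n (M : 'M[C]_n) : hermitian_mx M -> forall i j, (M i j)^* = M j i.
Proof. by move=> h i j; rewrite -{2}h mxE. Qed.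

End Quad.


Section Schur.
Variable R : realType.
Local Notation C := R[i].

Definition schur m (M : 'M[C]_m.+1) (k : 'I_m.+1) : 'M[C]_m :=
  \matrix_(i, j) (M (lift k i) (lift k j) - M (lift k i) k * M k (lift k j) / M k k).

Definition ext m (k : 'I_m.+1) (t : C) (v : 'cV[C]_m) : 'cV[C]_m.+1 :=
  \col_a (if unlift k a is Some j then v j 0 else t).

Lemma extk m k t (v : 'cV[C]_m) : ext k t v k 0 = t.
Proof. by rewrite mxE unlift_none. Qed.

Lemma extl m k t (v : 'cV[C]_m) j : ext k t v (lift k j) 0 = v j 0.
Proof. by rewrite mxE liftK. Qed.

Variables (m : nat) (M : 'M[C]_m.+1) (k : 'I_m.+1).
Hypothesis hM : hermitian_mx M.
Hypothesis d0 : 0 < M k k.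

Let dn0 : M k k != 0. Proof. by rewrite gt_eqF. Qed.
Let dc : (M k k)^* = M k k. Proof. by rewrite geC0_conj // ltW. Qed.

Lemma schur_herm : hermitian_mx (schur M k).
Proof.
apply/matrixP => i j; rewrite !mxE rmorphB !rmorphM fmorphV /= dc !hermE //.
by rewrite [M k _ * _]mulrC.
Qed.

Lemma schur_psd : psd_mx M -> psd_mx (schur M k).
Proof.
move=> hp v.
set b := \sum_j M k (lift k j) * v j 0.
set b' := \sum_i (v i 0)^* * M (lift k i) k.
have := hp (ext k (- b / M k k) v); rewrite -/(qf _ _) -/(qf _ _) (qf_split M k) !extk.
under eq_bigr => j _ do rewrite extl.
under [X in _ + X * _ + _]eq_bigr => i _ do rewrite extl.
under [X in _ + X]eq_bigr => i _ do (under eq_bigr => j _ do rewrite !extl).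
rewrite -/b -/b'.
have ct : (- b / M k k)^* = - b' / M k k.
  rewrite rmorphM rmorphN fmorphV /= dc rmorph_sum /b'; congr (- _ * _).
  by apply: eq_bigr => j _; rewrite rmorphM /= hermE // mulrC.
rewrite ct qfE.
have -> : \sum_i \sum_j (v i 0)^* * schur M k i j * v j 0 =
  \sum_i \sum_j (v i 0)^* * M (lift k i) (lift k j) * v j 0 - b' * b / M k k.
  have -> : b' * b / M k k = \sum_i \sum_j
     (v i 0)^* * M (lift k i) k * M k (lift k j) * v j 0 / M k k.
    rewrite /b /b' mulr_suml mulr_suml; apply: eq_bigr => i _.
    rewrite mulr_sumr mulr_suml; apply: eq_bigr => j _; ring.
  rewrite -sumrB; apply: eq_bigr => i _.
  rewrite -sumrB; apply: eq_bigr => j _.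
  by rewrite mxE; field.
set Q := \sum_i _.
have -> : - b' / M k k * M k k * (- b / M k k) + - b' / M k k * b + b' * (- b / M k k) + Q
  = Q - b' * b / M k k by field.
by [].
Qed.

Lemma schur_ker (u : 'rV[C]_m.+1) : u *m M = 0 ->
  (\row_j u 0 (lift k j)) *m schur M k = 0.
Proof.
move=> hu.
have E : forall c, u 0 k * M k c + \sum_i u 0 (lift k i) * M (lift k i) c = 0.
  move=> c; have := congr1 (fun A : 'rV_m.+1 => A 0 c) hu; rewrite !mxE.
  by rewrite (bigD1_ord k) //=.
apply/rowP => j; rewrite !mxE.
have -> : \sum_i (\row_j0 u 0 (lift k j0)) 0 i * schur M k i j =
  \sum_i u 0 (lift k i) * M (lift k i) (lift k j)
  - (\sum_i u 0 (lift k i) * M (lift k i) k) * M k (lift k j) / M k k.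
  rewrite big_distrl big_distrl /= -sumrB; apply: eq_bigr => i _.
  by rewrite !mxE; field.
have e1 : \sum_i u 0 (lift k i) * M (lift k i) (lift k j) = - (u 0 k * M k (lift k j)).
  by apply/eqP; rewrite -addr_eq0 addrC E.
have e2 : \sum_i u 0 (lift k i) * M (lift k i) k = - (u 0 k * M k k).
  by apply/eqP; rewrite -addr_eq0 addrC E.
by rewrite e1 e2; field.
Qed.

End Schur.


Section Irr.
Variable R : realType.
Local Notation C := R[i].

Definition offsec n (p q : R) (M : 'M[C]_n) :=
  forall i j, i != j -> secz p q (- M i j).
Definition closedset n (M : 'M[C]_n) (A : {set 'I_n}) :=
  forall i j, i \in A -> j \notin A -> M i j = 0 /\ M j i = 0.
Definition irr_set n (M : 'M[C]_n) :=
  forall A : {set 'I_n}, A != set0 -> A != setT -> ~ closedset M A.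

Lemma exists_notin n (B : {set 'I_n}) : B != setT -> exists j, j \notin B.
Proof.
move=> BT; have : ~~ [forall j, j \in B].
  by apply: contra BT => /forallP h; apply/eqP/setP => x; rewrite inE h.
by move/forallPn => [j jB]; exists j.
Qed.

Lemma lift_set_ne0 m (k : 'I_m.+1) (B : {set 'I_m}) :
  B != set0 -> [set lift k j | j in B] != set0.
Proof. by rewrite imset_eq0. Qed.

Lemma lift_set_neT m (k : 'I_m.+1) (B : {set 'I_m}) :
  [set lift k j | j in B] != setT.
Proof.
apply/negP => /eqP AT; have : k \in [set lift k j | j in B] by rewrite AT inE.
by case/imsetP => x _ /eqP; rewrite (negbTE (neq_lift k x)).
Qed.

Variables (m : nat) (M : 'M[C]_m.+1) (k : 'I_m.+1) (p q : R).
Hypothesis hM : hermitian_mx M.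
Hypothesis d0 : 0 < M k k.
Hypothesis p0 : 0 < p.
Hypothesis pq : p <= q.
Hypothesis hs : offsec p q M.

Lemma schur_dec (i j : 'I_m) : - schur M k i j =
  - M (lift k i) (lift k j) + (- M (lift k i) k) * (- M k (lift k j)) * (M k k)^-1.
Proof. by rewrite mxE; ring. Qed.

Let q2 : 0 <= q ^+ 2 - p ^+ 2.
Proof. by rewrite subr_ge0 ler_pXn2r // ?nnegrE ltW // (lt_le_trans p0). Qed.
Let p2 : 0 < p * q *+ 2.
Proof. by rewrite pmulrn_lgt0 // mulr_gt0 // (lt_le_trans p0). Qed.

Lemma schur_offsec : offsec (p * q *+ 2) (q ^+ 2 - p ^+ 2) (schur M k).
Proof.
move=> i j ij; rewrite schur_dec; apply: seczD => //.
  by apply: secz_mono => //; apply: hs; rewrite (inj_eq (@lift_inj _ k)).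
apply: seczMr; first by rewrite invr_gt0.
apply: seczM => //; apply: hs; by rewrite ?neq_lift // eq_sym neq_lift.
Qed.

Lemma schur_zero (i j : 'I_m) : i != j -> schur M k i j = 0 ->
  M (lift k i) (lift k j) = 0 /\ M (lift k i) k * M k (lift k j) = 0.
Proof.
move=> ij S0.
have := schur_dec i j; rewrite S0 oppr0 => /esym e.
have H1 : secz (p * q *+ 2) (q ^+ 2 - p ^+ 2) (- M (lift k i) (lift k j)).
  by apply: secz_mono => //; apply: hs; rewrite (inj_eq (@lift_inj _ k)).
have H2 : secz (p * q *+ 2) (q ^+ 2 - p ^+ 2)
    ((- M (lift k i) k) * (- M k (lift k j)) * (M k k)^-1).
  apply: seczMr; first by rewrite invr_gt0.
  apply: seczM => //; apply: hs; by rewrite ?neq_lift // eq_sym neq_lift.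
have [a0 b0] := secz_sum0 p2 q2 H1 H2 e.
split; first by apply/eqP; rewrite -oppr_eq0 a0.
move/eqP: b0; rewrite mulrNN mulf_eq0 invr_eq0 (gt_eqF d0) orbF => /eqP //.
Qed.

Lemma schur_irr : irr_set M -> irr_set (schur M k).
Proof.
move=> hirr B B0 BT cl.
case: (boolP [exists i in B, M (lift k i) k != 0]) => [/existsP[i0 /andP[i0B h0]] | /existsPn hn].
- apply: (hirr [set lift k j | j in ~: B]).
  + have [j jB] := exists_notin BT; apply/set0Pn; exists (lift k j).
    by apply: imset_f; rewrite inE.
  + exact: lift_set_neT.
  move=> x y /imsetP[j]; rewrite inE => jB -> {x} yA.
  have Mk : M k (lift k j) = 0.
    have i0j : i0 != j by apply: contraNneq jB => <-.
    have [_ /eqP] := schur_zero i0j (cl _ _ i0B jB).1.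
    by rewrite mulf_eq0 (negbTE h0) /= => /eqP.
  case: (unliftP k y) yA => [i ->|->] yA.
    have iB : i \in B.
      by apply: contraR yA => iB; apply: imset_f; rewrite inE.
    have ij : i != j by apply: contraNneq jB => <-.
    have [c1 c2] := cl _ _ iB jB.
    have [z1 _] := schur_zero ij c1.
    have ji : j != i by rewrite eq_sym.
    have [z2 _] := schur_zero ji c2.
    by split.
  by split=> //; rewrite -hermE // Mk rmorph0.
- apply: (hirr [set lift k j | j in B]).
  + exact: lift_set_ne0.
  + exact: lift_set_neT.
  move=> x y /imsetP[i iB ->] {x} yA.
  case: (unliftP k y) yA => [j ->|->] yA.
    have jB : j \notin B by apply: contra yA => jB; apply: imset_f.
    have ij : i != j by apply: contraNneq jB => <-.
    have [c1 c2] := cl _ _ iB jB.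
    have [z1 _] := schur_zero ij c1.
    have ji : j != i by rewrite eq_sym.
    have [z2 _] := schur_zero ji c2.
    by split.
  have Mk : M (lift k i) k = 0 by apply/eqP; move: (hn i); rewrite iB /= negbK.
  by split=> //; rewrite -hermE // Mk rmorph0.
Qed.

End Irr.


Section Main.
Variable R : realType.
Local Notation C := R[i].

Lemma qf_ext_e m (M : 'M[C]_m.+1) k t j :
  qf M (ext k t (\col_a (a == j)%:R)) =
  t^* * M k k * t + t^* * M k (lift k j) + M (lift k j) k * t
  + M (lift k j) (lift k j).
Proof.
rewrite (qf_split M k) !extk.
under eq_bigr => i _ do rewrite extl.
under [X in _ + X * _ + _]eq_bigr => i _ do rewrite extl.
under [X in _ + X]eq_bigr => i _ do (under eq_bigr => j0 _ do rewrite !extl).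
have s1 : \sum_i M k (lift k i) * (\col_a (a == j)%:R : 'cV[C]_m) i 0 = M k (lift k j).
  rewrite (bigD1 j) //= big1 ?addr0; first by rewrite mxE eqxx mulr1.
  by move=> i ij; rewrite mxE (negbTE ij) mulr0.
have s2 : \sum_i ((\col_a (a == j)%:R : 'cV[C]_m) i 0)^* * M (lift k i) k = M (lift k j) k.
  rewrite (bigD1 j) //= big1 ?addr0; first by rewrite mxE eqxx rmorph1 mul1r.
  by move=> i ij; rewrite mxE (negbTE ij) rmorph0 mul0r.
have s3 : \sum_i \sum_j0 ((\col_a (a == j)%:R : 'cV[C]_m) i 0)^* * M (lift k i) (lift k j0)
   * (\col_a (a == j)%:R : 'cV[C]_m) j0 0 = M (lift k j) (lift k j).
  rewrite (bigD1 j) //= [X in _ + X]big1 ?addr0; last first.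
    by move=> i ij; apply: big1 => c _; rewrite mxE (negbTE ij) rmorph0 !mul0r.
  rewrite (bigD1 j) //= big1 ?addr0; first by rewrite !mxE eqxx rmorph1 mul1r mulr1.
  by move=> i ij; rewrite !mxE (negbTE ij) mulr0.
by rewrite s1 s2 s3.
Qed.

Lemma psd_zero_diag m (M : 'M[C]_m.+1) k j : hermitian_mx M -> psd_mx M ->
  M k k = 0 -> M k (lift k j) = 0.
Proof.
move=> hM hp dk; apply/eqP/negP => /negP c0.
set c := M k (lift k j) in c0.
have c'0 : M (lift k j) k != 0 by rewrite -hermE // conjC_eq0.
set c' := M (lift k j) k in c'0.
set e := M (lift k j) (lift k j).
have e0 : 0 <= e := psd_diag _ hp.
have ce : e^* = e by rewrite geC0_conj.
have cc' : c'^* = c by rewrite /c' hermE.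
set t := - (e + 1) / (2 * c').
have ct : t^* = - (e + 1) / (2 * c).
  by rewrite /t rmorphM rmorphN fmorphV /= rmorphD rmorphM /= ce cc' rmorph1 rmorph_nat.
have := hp (ext k t (\col_a (a == j)%:R)); rewrite -/(qf _ _) qf_ext_e dk ct.
have -> : - (e + 1) / (2 * c) * 0 * t + - (e + 1) / (2 * c) * c + c' * t + e = -1.
  rewrite /t; field; by rewrite c0 c'0.
by move=> h; have := lt_le_trans (ltrN10 _) h; rewrite ltxx.
Qed.

Lemma main m : forall (M : 'M[C]_m.+1), hermitian_mx M -> psd_mx M -> irr_set M ->
  offsec (sin (pi / 2 ^+ m.+1)) (cos (pi / 2 ^+ m.+1)) M ->
  forall u : 'rV[C]_m.+1, u *m M = 0 -> u != 0 -> forall a, u 0 a != 0.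
Proof.
elim: m => [|m IH] M hM hp hirr hsec u hu u0 a.
  apply: contra u0 => /eqP ua; apply/eqP/rowP => b.
  by rewrite (ord1 a) in ua; rewrite (ord1 b) ua mxE.
have [k uk] : exists k, u 0 k != 0.
  apply/existsP; apply: contraR u0 => /existsPn h; apply/eqP/rowP => b.
  by rewrite mxE; move/negbNE/eqP: (h b).
have dge : 0 <= M k k := psd_diag _ hp.
have dpos : 0 < M k k.
  rewrite lt_def dge andbT; apply/negP => /eqP dk.
  apply: (hirr [set k]).
  - by apply/set0Pn; exists k; rewrite inE.
  - apply/negP => /eqP kT; have : lift k ord0 \in [set k] by rewrite kT inE.
    by rewrite inE eq_sym (negbTE (neq_lift k ord0)).
  move=> x y; rewrite !inE => /eqP -> yk.
  have ky : k != y by rewrite eq_sym.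
  have [j -> _] := unlift_some ky.
  have z1 : M k (lift k j) = 0 by apply: psd_zero_diag.
  by split=> //; rewrite -hermE // z1 rmorph0.
have p0 := @sin_th_pos R m.+1.
have pq := @sin_le_cos R m.
have hs' : offsec (sin (pi / 2 ^+ m.+1)) (cos (pi / 2 ^+ m.+1)) (schur M k).
  by rewrite (sin_th2 R m.+1) (cos_th2 R m.+1); apply: schur_offsec.
have hu' := schur_ker dpos hu.
have u'0 : (\row_j u 0 (lift k j)) != 0.
  apply/negP => /eqP e.
  have := congr1 (fun A : 'rV_m.+2 => A 0 k) hu; rewrite !mxE (bigD1_ord k) //= big1 ?addr0.
    by move/eqP; rewrite mulf_eq0 (negbTE uk) (gt_eqF dpos).
  move=> i _; have := congr1 (fun A : 'rV_m.+1 => A 0 i) e; rewrite !mxE => ->.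
  by rewrite mul0r.
have IH' := IH _ (schur_herm hM dpos) (schur_psd hM dpos hp)
  (schur_irr hM dpos p0 pq hsec hirr) hs' _ hu' u'0.
case: (unliftP k a) => [j ->|->] //.
by have := IH' j; rewrite mxE.
Qed.

End Main.


Lemma perm_of_set n (A : {set 'I_n}) :
  exists s : 'S_n, forall i, (s i \in A) = (i < #|A|)%N.
Proof.
set sq := enum A ++ enum (~: A).
have sz : size sq = n by rewrite size_cat -!cardE cardsC card_ord.
have uq : uniq sq.
  rewrite cat_uniq !enum_uniq andbT /=; apply/hasPn => x.
  by rewrite !mem_enum inE.
pose f (i : 'I_n) : 'I_n := nth i sq i.
have finj : injective f.
  move=> i j; rewrite /f [nth j sq j](set_nth_default i) ?sz //.
  by move/eqP; rewrite nth_uniq ?sz // => /eqP /val_inj.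
exists (perm finj) => i; rewrite permE /f nth_cat -cardE.
case: ifP => hi.
  by rewrite -mem_enum mem_nth // -cardE.
apply/negbTE.
have : (i - #|A| < size (enum (~: A)))%N.
  rewrite -cardE ltn_subLR; last by rewrite leqNgt hi.
  by rewrite cardsC card_ord.
by move=> h; have := mem_nth i h; rewrite mem_enum inE.
Qed.

Section Final.
Variable R : realType.
Local Notation C := R[i].

Lemma irr_irr_set n (M : 'M[C]_n) : irreducible_mx M -> irr_set M.
Proof.
move=> hirr A A0 AT cl; apply: hirr.
have [s hs] := perm_of_set A.
exists s, #|A|; split; first by rewrite card_gt0.
split.
  have [j jA] := exists_notin AT.
  have e : (#|A| + #|~: A| = n)%N by rewrite cardsC card_ord.
  rewrite -[X in (_ < X)%N]e -[X in (X < _)%N]addn0 ltn_add2l card_gt0.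
  by apply/set0Pn; exists j; rewrite inE.
move=> i j hi hj; apply: cl; by rewrite hs // (negbTE hj).
Qed.

End Final.

Unset Implicit Arguments. Set Strict Implicit.

Theorem lemma5 (R : realType) (n : nat) (M : 'M[R[i]]_n) :
  hermitian_mx M -> psd_mx M -> irreducible_mx M ->
  (forall i j : 'I_n, i != j -> M i j != 0 ->
     arg_in (- M i j) (- (pi / 2 ^+ n)) (pi / 2 ^+ n)) ->
  (n - 1 <= \rank M)%N.
Proof.
case: n M => [|m] M hM hp hirr harg; first by [].
have hi := irr_irr_set hirr.
have hs : offsec (sin (pi / 2 ^+ m.+1)) (cos (pi / 2 ^+ m.+1)) M.
  move=> i j ij; case: (eqVneq (M i j) 0) => [->|nz]; first by left; rewrite oppr0.
  right; apply: arg_sec; last by rewrite oppr_eq0.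
    by rewrite th_pos th_le.
  exact: harg.
have key := main hM hp hi hs.
set K := kermx M.
have Kr : forall i, row i K *m M = 0.
  by move=> i; rewrite -row_mul mulmx_ker row0.
have rK : (\rank K <= 1)%N.
  case: (boolP [exists r, row r K != 0]) => [/existsP [r wr] | /existsPn h]; last first.
    have -> : K = 0 by apply/row_matrixP => i; apply/eqP; rewrite row0; exact: negbNE (h i).
    by rewrite mxrank0.
  set w := row r K.
  have w0 : w 0 0 != 0 by apply: key => //; exact: Kr.
  apply: leq_trans (rank_leq_row w).
  apply: mxrankS; apply/row_subP => i.
  have -> : row i K = (row i K 0 0 / w 0 0) *: w.
    apply/eqP; rewrite -subr_eq0; apply/negP => /negP z0.
    have := key _ _ z0 0; rewrite mulmxBl -scalemxAl !Kr scaler0 subr0 => /(_ erefl).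
    rewrite mxE [X in _ + X]mxE [X in - X]mxE divfK // subrr eqxx; by [].
  by rewrite scalemx_sub.
move: rK; rewrite mxrank_ker leq_subLR => h.
by rewrite leq_subLR addnC.
Qed.
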